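(* Let $k$ be a natural number and let $q \in C^1(\mathbb{R}^n,\mathbb{R})$ be a scalar function such that there exists $m$ with $q(\mathbf{x}) = f(x_m)\cdot \mathbf{x}_{i\neq m}^{\beta}$ for a multi-index $\beta\in\mathbb{N}_0^{n-1}$ and $f$ any function of $x_m$ that can be integrated. Set $\lambda = \left\lceil \frac{|\beta|-1}{2}\right\rceil$ and $W(\mathbf{x}) = \mathcal{A}_{x_m}^{2\lambda+2k} q(\mathbf{x}) = \mathbf{x}_{i\neq m}^{\beta}\, \mathcal{A}_{x_m}^{2\lambda+2k} f(x_m)$. Then $$Q(\mathbf{x}) := \sum_{p=0}^{\lambda} (-1)^p \binom{k+p-1}{p} \partial_{x_m}^{2\lambda-2p}\, \Delta_{\setminus m}^{p} W(\mathbf{x}) = \sum_{p=0}^{\lambda} (-1)^p \binom{k+p-1}{p} \mathcal{A}_{x_m}^{2k+2p}\, \Delta_{\setminus m}^{p} q(\mathbf{x})$$ satisfies $\Delta^k Q = q$, where $\Delta=\sum_{i=1}^n\partial_{x_i}^2$.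
   Context: $\mathbf{x}_{i\neq m}^{\beta}$ denotes $\prod_{i\neq m} x_i^{\beta_i}$ and $|\beta|$ its total degree; $\lceil h\rceil$ is the least integer $\ge h$. The incomplete Laplacian is $\Delta_{\setminus m} f := \sum_{i\neq m}\partial_{x_i}^2 f$, with $\Delta_{\setminus m}^p$ its $p$-fold application. The antiderivative is $\mathcal{A}_{x_j} f(\mathbf{x}) := \int_{x_0}^{x_j} f(x_1,\dots,\xi_j,\dots,x_n)\,d\xi_j$ with freely chosen lower limit $x_0$, and $\mathcal{A}_{x_j}^p := \mathcal{A}_{x_j}^{p-1}\mathcal{A}_{x_j}$ (repeated integration). Zeroth powers of these operators are the identity. *)

(* Defs.v *)
From HB Require Import structures.
From mathcomp Require Import all_boot all_order all_algebra.
From mathcomp Require Import all_classical all_reals all_analysis.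
Set Implicit Arguments. Unset Strict Implicit. Unset Printing Implicit Defensive.
Import Order.TTheory GRing.Theory Num.Theory.
Import numFieldNormedType.Exports.
Local Open Scope classical_set_scope.
Local Open Scope ring_scope.

Section Defs.
Variables (R : realType) (n : nat).
Notation V := 'rV[R]_n.

Definition ebasis (j : 'I_n) : V := delta_mx 0 j.

Definition partial (j : 'I_n) (g : V -> R) : V -> R := fun x => 'D_(ebasis j) g x.

Definition partialn (j : 'I_n) (p : nat) (g : V -> R) : V -> R := iter p (partial j) g.

Definition laplacian (g : V -> R) : V -> R :=
  fun x => \sum_(i < n) partial i (partial i g) x.

Definition laplacian_wo (m : 'I_n) (g : V -> R) : V -> R :=
  fun x => \sum_(i < n | i != m) partial i (partial i g) x.

Definition setc (x : V) (j : 'I_n) (t : R) : V :=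
  \row_i (if i == j then t else x 0 i).

Definition C1 (g : V -> R) : Prop :=
  forall j : 'I_n, (forall x, derivable g x (ebasis j)) /\ continuous (partial j g).

Definition monom (m : 'I_n) (beta : 'I_n -> nat) (x : V) : R :=
  \prod_(i < n | i != m) (x 0 i) ^+ beta i.

Definition absdeg (m : 'I_n) (beta : 'I_n -> nat) : nat :=
  (\sum_(i < n | i != m) beta i)%N.
End Defs.

Definition oint (R : realType) (a b : R) (g : R -> R) : R :=
  if a <= b then Rintegral lebesgue_measure `[a, b] g
  else - Rintegral lebesgue_measure `[b, a] g.

Definition antider1 (R : realType) (x0 : R) (g : R -> R) : R -> R :=
  fun t => oint x0 t g.
Definition antider1n (R : realType) (x0 : R) (p : nat) (g : R -> R) : R -> R :=
  iter p (antider1 x0) g.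

Definition antider (R : realType) (n : nat) (x0 : R) (j : 'I_n) (g : 'rV[R]_n -> R)
  : 'rV[R]_n -> R :=
  fun x => oint x0 (x 0 j) (fun xi => g (setc x j xi)).
Definition antidern (R : realType) (n : nat) (x0 : R) (j : 'I_n) (p : nat)
  (g : 'rV[R]_n -> R) : 'rV[R]_n -> R := iter p (antider x0 j) g.

Definition lambda_of (R : realType) (b : nat) : nat :=
  `| Num.ceil (((b%:R : R) - 1) / 2) |%N.

(* Main.v *)
Require Import Defs.
From HB Require Import structures.
From mathcomp Require Import all_boot all_order all_algebra.
From mathcomp Require Import all_classical all_reals all_analysis.
From mathcomp Require Import zify ring lra.
Import Order.TTheory GRing.Theory Num.Theory.
Import numFieldNormedType.Exports.
Local Open Scope classical_set_scope.
Local Open Scope ring_scope.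


Section OneD.
Context {R : realType}.

Lemma der_transfer {V1 V2 : normedModType R} (G : V1 -> R) (H : V2 -> R)
  (x v : V1) (y w : V2) :
  (forall h : R, G (h *: v + x) = H (h *: w + y)) ->
  (derivable G x v <-> derivable H y w) /\ 'D_v G x = 'D_w H y.
Proof.
move=> e.
have E : (fun h : R => h^-1 *: ((G \o shift x) (h *: v) - G x)) =
         (fun h : R => h^-1 *: ((H \o shift y) (h *: w) - H y)).
  apply/funext => h /=; have := e 0; rewrite !scale0r !add0r => ->.
  by rewrite e.
by rewrite /derivable /derive E.
Qed.

Lemma cont_int (g : R -> R) (a b : R) : continuous g ->
  (@lebesgue_measure R).-integrable `[a, b] (EFin \o g).
Proof.
move=> cg; apply: continuous_compact_integrable; first exact: segment_compact.
exact: continuous_subspaceT.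
Qed.

Lemma oint_split (g : R -> R) (c a b : R) : continuous g -> c <= a -> c <= b ->
  oint a b g = (\int[lebesgue_measure]_(t in `[c, b]) g t) -
               (\int[lebesgue_measure]_(t in `[c, a]) g t).
Proof.
move=> cg ca cb; rewrite /oint; case: ifPn => ab.
- rewrite (@Rintegral_itvB _ g (BLeft c) (BRight b) a) ?bnd_simp //; last exact: cont_int.
  rewrite Rintegral_itv_obnd_cbnd //.
  have H := cont_int _ a b cg. apply: integrableS H => //.
  by apply: subset_itvr; rewrite bnd_simp.
- rewrite -ltNge in ab.
  have E := (@Rintegral_itvB _ g (BLeft c) (BRight a) b).
  rewrite -[RHS]opprB E ?bnd_simp ?(ltW ab) //; last exact: cont_int.
  rewrite Rintegral_itv_obnd_cbnd //.
  have H := cont_int _ b a cg. apply: integrableS H => //.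
  by apply: subset_itvr; rewrite bnd_simp.
Qed.


Lemma FTC_ant (x0 : R) (g : R -> R) (t : R) : continuous g ->
  derivable (antider1 x0 g) t 1 /\ 'D_1 (antider1 x0 g) t = g t.
Proof.
move=> cg.
set c := Num.min x0 t - 1.
have hm1 : Num.min x0 t <= t by rewrite ge_min lexx orbT.
have hm2 : Num.min x0 t <= x0 by rewrite ge_min lexx.
have ct : c < t by rewrite /c; lra.
have cx : c <= x0 by rewrite /c; lra.
pose F s := \int[lebesgue_measure]_(u in `[c, s]) g u.
have nE : \forall s \near t, (F - cst (F x0)) s = antider1 x0 g s.
  near=> s. change (F s - F x0 = antider1 x0 g s).
  rewrite /antider1 (oint_split g c x0 s cg cx) //.
  by apply: ltW; near: s; exact: lt_nbhsr.
have tu : t < t + 1 by rewrite ltrDl.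
have [dF dFE] := @continuous_FTC1_closed R g c t (t + 1) tu (cont_int _ _ _ cg) ct (cg t).
have dG : derivable (F - cst (F x0)) t 1 := derivableB dF (derivable_cst _ _ _).
split.
- exact: (near_eq_derivable nE dG).
- rewrite -(near_eq_derive _ nE) (deriveB dF (derivable_cst _ _ _)) derive_cst subr0.
  by rewrite -derive1E.
Unshelve. all: by end_near.
Qed.

End OneD.

Section Multi.
Context {R : realType} {n : nat} (m : 'I_n).
Notation V := 'rV[R]_n.

Lemma coordE (h : R) (j : 'I_n) (x : V) (i : 'I_n) :
  (h *: ebasis R j + x) 0 i = if i == j then h + x 0 i else x 0 i.
Proof.
rewrite !mxE eqxx /=; case: eqP => _; by rewrite ?mulr1 ?mulr0 ?add0r.
Qed.

Lemma setc_m (x : V) t : setc x m t 0 m = t.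
Proof. by rewrite mxE eqxx. Qed.

Lemma shift_setc (h : R) (x : V) : h *: ebasis R m + x = setc x m (h + x 0 m).
Proof.
apply/rowP => i; rewrite coordE mxE; case: eqP => [->|] //.
Qed.

Definition indep (P : V -> R) := forall x t, P (setc x m t) = P x.

Definition prodf (P : V -> R) (g : R -> R) : V -> R := fun x => P x * g (x 0 m).

Lemma prodf_m (P : V -> R) (g : R -> R) (x : V) : indep P -> derivable g (x 0 m) 1 ->
  derivable (prodf P g) x (ebasis R m) /\
  'D_(ebasis R m) (prodf P g) x = P x * 'D_1 g (x 0 m).
Proof.
move=> iP dg.
have e : forall h : R, prodf P g (h *: ebasis R m + x) = (cst (P x) * g) (h *: 1 + x 0 m).
  by move=> h; rewrite /prodf shift_setc iP setc_m [h *: 1]mulr1.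
have [E1 E2] := der_transfer _ _ _ _ _ _ e.
split; first by apply/E1; exact: (derivableM (derivable_cst _ _ _) dg).
rewrite E2 (deriveM (derivable_cst _ _ _) dg).
by rewrite derive_cst scaler0 addr0.
Qed.

Lemma prodf_o (P : V -> R) (g : R -> R) (x : V) (j : 'I_n) : j != m -> derivable P x (ebasis R j) ->
  derivable (prodf P g) x (ebasis R j) /\
  'D_(ebasis R j) (prodf P g) x = 'D_(ebasis R j) P x * g (x 0 m).
Proof.
move=> jm dP.
have e : forall h : R, prodf P g (h *: ebasis R j + x) = (P * cst (g (x 0 m))) (h *: ebasis R j + x).
  by move=> h; rewrite /prodf coordE eq_sym (negPf jm).
have [E1 E2] := der_transfer _ _ _ _ _ _ e.
split; first by apply/E1; exact: (derivableM dP (derivable_cst _ _ _)).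
rewrite E2 (deriveM dP (derivable_cst _ _ _)).
by rewrite derive_cst scaler0 add0r mulrC.
Qed.


Arguments prodf_o {P} g {x j}.
Arguments prodf_m {P g} x.

Lemma const_der (P : V -> R) (x : V) (v : V) : (forall x y, P x = P y) ->
  derivable P x v /\ 'D_v P x = 0.
Proof.
move=> cP.
have e : forall h : R, P (h *: v + x) = cst (P x) (h *: v + x) by move=> h; exact: cP.
have [E1 E2] := der_transfer _ _ _ _ _ _ e.
by split; [apply/E1; exact: derivable_cst | rewrite E2 derive_cst].
Qed.

Fixpoint Pd (d : nat) (P : V -> R) : Prop :=
  indep P /\ match d with
  | 0 => forall x y, P x = P y
  | d'.+1 => forall j, j != m -> (forall x, derivable P x (ebasis R j)) /\ Pd d' (partial j P)
  end.

Lemma Pd_indep d P : Pd d P -> indep P.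
Proof. by case: d => [[]|d []]. Qed.

Lemma Pd_der d P j x : Pd d P -> j != m -> derivable P x (ebasis R j).
Proof.
case: d => [[_ cP] _|d [_ H] jm]; first exact: (const_der P x (ebasis R j) cP).1.
exact: ((H j jm).1 x).
Qed.

Lemma Pd_const d (c : R) : Pd d (fun _ => c).
Proof.
elim: d c => [|d IH] c; first by split.
split; first by [].
move=> j jm; split; first by move=> x; exact: derivable_cst.
have -> : partial j (fun _ : V => c) = (fun _ => 0).
  by apply/funext => x; rewrite /partial; exact: derive_cst.
exact: IH.
Qed.

Lemma Pd_partial d P j : Pd d P -> j != m -> Pd d.-1 (partial j P).
Proof.
case: d => [[_ cP] jm|d [_ H] jm]; last exact: (H j jm).2.
have -> : partial j P = (fun _ => 0).
  by apply/funext => x; rewrite /partial; exact: (const_der P x (ebasis R j) cP).2.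
exact: Pd_const.
Qed.

Lemma Pd_add d P1 P2 : Pd d P1 -> Pd d P2 -> Pd d (fun x => P1 x + P2 x).
Proof.
elim: d P1 P2 => [|d IH] P1 P2.
  by move=> [i1 c1] [i2 c2]; split; [move=> x t; rewrite i1 i2|move=> x y; rewrite (c1 x y) (c2 x y)].
move=> [i1 H1] [i2 H2]; split; first by move=> x t; rewrite i1 i2.
move=> j jm; have [d1 p1] := H1 j jm; have [d2 p2] := H2 j jm.
split; first by move=> x; exact: (derivableD (d1 x) (d2 x)).
have -> : partial j (fun x => P1 x + P2 x) = (fun x => partial j P1 x + partial j P2 x).
  by apply/funext => x; rewrite /partial (deriveD (d1 x) (d2 x)).
exact: (IH _ _ p1 p2).
Qed.

Lemma Pd_scale d (c : R) P : Pd d P -> Pd d (fun x => c * P x).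
Proof.
elim: d P => [|d IH] P.
  by move=> [i1 c1]; split; [move=> x t; rewrite i1|move=> x y; rewrite (c1 x y)].
move=> [i1 H1]; split; first by move=> x t; rewrite i1.
move=> j jm; have [d1 p1] := H1 j jm.
split; first by move=> x; exact: (derivableM (derivable_cst c _ _) (d1 x)).
have -> : partial j (fun x => c * P x) = (fun x => c * partial j P x).
  apply/funext => x; rewrite /partial.
  rewrite (deriveM (derivable_cst c _ _) (d1 x)) derive_cst scaler0 addr0.
  by [].
exact: (IH _ p1).
Qed.


Arguments Pd_indep {d P}.
Arguments Pd_der {d P j x}.
Arguments Pd_partial {d P j}.
Arguments Pd_add {d P1 P2}.
Arguments Pd_scale {d} c {P}.

Lemma Pd_sum d (G : 'I_n -> V -> R) : (forall i, i != m -> Pd d (G i)) ->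
  Pd d (fun x => \sum_(i < n | i != m) G i x).
Proof.
move=> HG.
suff H : forall s : seq 'I_n, Pd d (fun x => \sum_(i <- s | i != m) G i x) by exact: H.
elim => [|i s IH].
  have -> : (fun x : V => \sum_(i <- [::] | i != m) G i x) = (fun _ => 0).
    by apply/funext => x; rewrite big_nil.
  exact: Pd_const.
case im : (i != m).
  have -> : (fun x : V => \sum_(i0 <- i :: s | i0 != m) G i0 x) =
            (fun x => G i x + \sum_(i0 <- s | i0 != m) G i0 x).
    by apply/funext => x; rewrite big_cons im.
  exact: Pd_add (HG i im) IH.
have -> : (fun x : V => \sum_(i0 <- i :: s | i0 != m) G i0 x) =
          (fun x => \sum_(i0 <- s | i0 != m) G i0 x).
  by apply/funext => x; rewrite big_cons im.
exact: IH.
Qed.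

Lemma Pd_lap d P : Pd d P -> Pd (d - 2) (laplacian_wo m P).
Proof.
move=> HP; apply: Pd_sum => i im.
have -> : (d - 2 = d.-1.-1)%N by lia.
exact: Pd_partial (Pd_partial HP im) im.
Qed.

Lemma Pd_lap0 d P : Pd d P -> (d < 2)%N -> laplacian_wo m P = (fun _ => 0).
Proof.
move=> HP d2; apply/funext => x; rewrite /laplacian_wo.
apply: big1 => i im.
have H0 : Pd 0 (partial i P).
  have -> : 0%N = d.-1 by lia.
  exact: Pd_partial HP im.
case: H0 => _ cP.
exact: (const_der _ x (ebasis R i) cP).2.
Qed.

Lemma iterL_Pd d P p : Pd d P -> Pd (d - 2 * p) (iter p (laplacian_wo m) P).
Proof.
move=> HP; elim: p => [|p IH]; first by rewrite muln0 subn0.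
have -> : (d - 2 * p.+1 = (d - 2 * p) - 2)%N by lia.
exact: Pd_lap IH.
Qed.
Arguments iterL_Pd {d P} p.



Definition dec (g : 'I_n -> nat) (j : 'I_n) : 'I_n -> nat :=
  fun i => if i == j then (g i).-1 else g i.

Lemma monom_indep g : indep (monom m g).
Proof. by move=> x t; rewrite /monom; apply: eq_bigr => i im; rewrite mxE (negPf im). Qed.

Lemma monom_der g (x : V) j : j != m ->
  derivable (monom m g) x (ebasis R j) /\
  'D_(ebasis R j) (monom m g) x = (g j)%:R * monom m (dec g j) x.
Proof.
move=> jm.
pose C := \prod_(i < n | (i != m) && (i != j)) x 0 i ^+ g i.
have e : forall h : R, monom m g (h *: ebasis R j + x) =
    (C \o* (@GRing.exp R ^~ (g j))) (h *: 1 + x 0 j).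
  move=> h; rewrite /monom (bigD1 j) //= coordE eqxx [h *: 1]mulr1; congr (_ * _).
  by apply: eq_bigr => i /andP[_ ij]; rewrite coordE (negPf ij).
have [E1 E2] := der_transfer _ _ _ _ _ _ e.
have dE : derivable (@GRing.exp R ^~ (g j)) (x 0 j) 1 by apply: exprn_derivable.
split; first by apply/E1; exact: (derivableM dE (derivable_cst _ _ _)).
rewrite E2 (deriveMr _ dE) exp_derive.
rewrite /monom (bigD1 j jm) /dec eqxx /=.
have -> : \prod_(i < n | (i != m) && (i != j))
    x 0 i ^+ (if i == j then (g i).-1 else g i) = C.
  by apply: eq_bigr => i /andP[_ /negPf ->].
rewrite [_%:A]mulr1.
change ((g j)%:R *: x 0 j ^+ (g j).-1) with ((g j)%:R * x 0 j ^+ (g j).-1).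
ring.
Qed.

Lemma absdeg_dec g j : j != m -> (0 < g j)%N ->
  absdeg m (dec g j) = (absdeg m g).-1.
Proof.
move=> jm gp; rewrite /absdeg (bigD1 j jm) [in RHS](bigD1 j jm) /= /dec eqxx.
have -> : (\sum_(i < n | (i != m) && (i != j)) (if i == j then (g i).-1 else g i) =
          \sum_(i < n | (i != m) && (i != j)) g i)%N.
  by apply: eq_bigr => i /andP[_ /negPf ->].
by case: (g j) gp.
Qed.

Lemma Pd_monom d g : absdeg m g = d -> Pd d (monom m g).
Proof.
elim: d g => [|d IH] g hg.
  have g0 : forall i, i != m -> g i = 0%N.
    by move=> i im; move: hg; rewrite /absdeg (bigD1 i im) /=; lia.
  split; first exact: monom_indep.
  move=> x y; rewrite /monom !big1 // => i im; by rewrite g0 // expr0.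
split; first exact: monom_indep.
move=> j jm; split; first by move=> x; exact: (monom_der g x j jm).1.
have -> : partial j (monom m g) = (fun x : V => (g j)%:R * monom m (dec g j) x).
  by apply/funext => x; exact: (monom_der g x j jm).2.
case: (posnP (g j)) => [g0|gpos].
  have -> : (fun x : V => (g j)%:R * monom m (dec g j) x) = (fun _ => 0).
    by apply/funext => x; rewrite g0 mul0r.
  exact: Pd_const.
apply: Pd_scale; apply: IH; by rewrite absdeg_dec // hg.
Qed.


Lemma partial_o_prodf (P : V -> R) (g : R -> R) j : j != m ->
  (forall x, derivable P x (ebasis R j)) -> partial j (prodf P g) = prodf (partial j P) g.
Proof. by move=> jm dP; apply/funext => x; rewrite /partial (prodf_o g jm (dP x)).2. Qed.
Arguments partial_o_prodf {P} g {j}.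


Lemma partial_m_prodf (P : V -> R) (g : R -> R) : indep P ->
  (forall t, derivable g t 1) -> partial m (prodf P g) = prodf P (fun t => 'D_1 g t).
Proof. by move=> iP dg; apply/funext => x; rewrite /partial (prodf_m x iP (dg _)).2. Qed.
Arguments partial_m_prodf {P g}.


Lemma L_prodf d (P : V -> R) (g : R -> R) : Pd d P ->
  laplacian_wo m (prodf P g) = prodf (laplacian_wo m P) g.
Proof.
move=> HP; apply/funext => x; rewrite /laplacian_wo /prodf mulr_suml.
apply: eq_bigr => i im.
rewrite (partial_o_prodf g im (fun y => Pd_der HP im)).
rewrite (partial_o_prodf g im (fun y => Pd_der (Pd_partial HP im) im)).
by [].
Qed.
Arguments L_prodf {d P} g.


Lemma iterL_prodf d (P : V -> R) (g : R -> R) p : Pd d P ->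
  iter p (laplacian_wo m) (prodf P g) = prodf (iter p (laplacian_wo m) P) g.
Proof.
move=> HP; elim: p => [//|p IH].
by rewrite iterS IH (L_prodf g (iterL_Pd p HP)).
Qed.
Arguments iterL_prodf {d P} g p.


Lemma prodf_derivable d (P : V -> R) (g : R -> R) : Pd d P ->
  (forall t, derivable g t 1) -> forall i x, derivable (prodf P g) x (ebasis R i).
Proof.
move=> HP dg i x; case: (eqVneq i m) => [->|im].
  exact: (prodf_m x (Pd_indep HP) (dg _)).1.
exact: (prodf_o g im (Pd_der HP im)).1.
Qed.
Arguments prodf_derivable {d P g}.


Lemma prodf_partial_derivable d (P : V -> R) (g : R -> R) : Pd d P ->
  (forall t, derivable g t 1) -> (forall t, derivable (fun t => 'D_1 g t) t 1) ->
  forall i x, derivable (partial i (prodf P g)) x (ebasis R i).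
Proof.
move=> HP dg ddg i x; case: (eqVneq i m) => [->|im].
  rewrite (partial_m_prodf (Pd_indep HP) dg).
  exact: (prodf_derivable HP ddg).
rewrite (partial_o_prodf g im (fun y => Pd_der HP im)).
exact: (prodf_derivable (Pd_partial HP im) dg).
Qed.
Arguments prodf_partial_derivable {d P g}.



Lemma oint_scale (a b c : R) (g : R -> R) : continuous g ->
  oint a b (fun t => c * g t) = c * oint a b g.
Proof.
move=> cg; rewrite /oint; case: ifP => _.
  by rewrite RintegralZl //; exact: cont_int.
by rewrite RintegralZl ?mulrN //; exact: cont_int.
Qed.

Lemma antider_prodf (x0 : R) (P : V -> R) (g : R -> R) : indep P -> continuous g ->
  antider x0 m (prodf P g) = prodf P (antider1 x0 g).
Proof.
move=> iP cg; apply/funext => x; rewrite /antider /prodf /antider1.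
rewrite -oint_scale //; congr oint; apply/funext => xi.
by rewrite iP setc_m.
Qed.

Lemma partial_lin N (c : 'I_N -> R) (G : 'I_N -> V -> R) i :
  (forall p x, derivable (G p) x (ebasis R i)) ->
  partial i (fun x => \sum_(p < N) c p * G p x) =
  (fun x => \sum_(p < N) c p * partial i (G p) x).
Proof.
move=> dG; apply/funext => x; rewrite /partial.
have -> : (fun x => \sum_(p < N) c p * G p x) = \sum_(p < N) (cst (c p) * G p).
  by rewrite fct_sumE.
rewrite derive_sum; last by move=> p; exact: (derivableM (derivable_cst _ _ _) (dG p x)).
apply: eq_bigr => p _.
by rewrite (deriveM (derivable_cst _ _ _) (dG p x)) derive_cst scaler0 addr0.
Qed.

Lemma lap_lin N (c : 'I_N -> R) (G : 'I_N -> V -> R) :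
  (forall p i x, derivable (G p) x (ebasis R i)) ->
  (forall p i x, derivable (partial i (G p)) x (ebasis R i)) ->
  laplacian (fun x => \sum_(p < N) c p * G p x) =
  (fun x => \sum_(p < N) c p * laplacian (G p) x).
Proof.
move=> d1 d2; apply/funext => x; rewrite /laplacian.
transitivity (\sum_(i < n) \sum_(p < N) c p * partial i (partial i (G p)) x).
  apply: eq_bigr => i _.
  rewrite (partial_lin _ c _ _ (fun p y => d1 p i y)).
  by rewrite (partial_lin _ c _ _ (fun p y => d2 p i y)).
rewrite exchange_big; apply: eq_bigr => p _.
by rewrite mulr_sumr.
Qed.

End Multi.
Arguments prodf_o {R n} m {P} g {x j}.
Arguments prodf_m {R n} m {P g} x.
Arguments Pd_indep {R n} m {d P}.
Arguments Pd_der {R n} m {d P j x}.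
Arguments Pd_partial {R n} m {d P j}.
Arguments Pd_add {R n} m {d P1 P2}.
Arguments Pd_scale {R n} m {d} c {P}.
Arguments iterL_Pd {R n} m {d P} p.
Arguments partial_o_prodf {R n} m {P} g {j}.
Arguments partial_m_prodf {R n} m {P g}.
Arguments L_prodf {R n} m {d P} g.
Arguments iterL_prodf {R n} m {d P} g p.
Arguments prodf_derivable {R n} m {d P g}.
Arguments prodf_partial_derivable {R n} m {d P g}.

Lemma lam_bound (R : realType) (b : nat) : (b <= 2 * lambda_of R b + 1)%N.
Proof.
rewrite /lambda_of; set c := Num.ceil _.
have hb : (0 : R) <= b%:R := ler0n R b.
have c0 : (0 <= c)%R by rewrite /c ceil_ge0; lra.
have hc := ceil_ge ((b%:R - 1) / 2 : R).
rewrite -/c -(gez0_abs c0) in hc.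
set l := `|c|%N in hc *.
have : (b%:R : R) <= (2 * l + 1)%:R.
  rewrite natrD natrM.
  have hc2 : (b%:R - 1) / 2 <= (l%:R : R) := hc.
  have -> : (2%:R : R) = 2 by [].
  lra.
by rewrite ler_nat.
Qed.

Definition cf (R : realType) (k p : nat) : R := (-1) ^+ p * ('C(k + p - 1, p))%:R.

Lemma cf0 (R : realType) k : cf R k 0 = 1.
Proof. by rewrite /cf expr0 mul1r bin0. Qed.

Lemma cf0S (R : realType) p : cf R 0 p.+1 = 0.
Proof. by rewrite /cf add0n subSS subn0 bin_small // mulr0. Qed.

Lemma cfS (R : realType) k p : cf R k.+1 p + cf R k.+1 p.+1 = cf R k p.+1.
Proof.
rewrite /cf.
have -> : (k.+1 + p - 1 = k + p)%N by lia.
have -> : (k.+1 + p.+1 - 1 = (k + p).+1)%N by lia.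
have -> : (k + p.+1 - 1 = k + p)%N by lia.
rewrite binS natrD exprS; ring.
Qed.

Lemma comb (R : realType) lam k (S : nat -> R) : S lam.+1 = 0 ->
  \sum_(p < lam.+1) cf R k.+1 p * (S p.+1 + S p) = \sum_(p < lam.+1) cf R k p * S p.
Proof.
move=> S0.
under eq_bigr => p _ do rewrite mulrDr.
rewrite big_split /= big_ord_recr /= S0 mulr0 addr0.
rewrite big_ord_recl [in RHS]big_ord_recl !cf0 addrCA; congr (_ + _).
rewrite -big_split /=; apply: eq_bigr => p _.
by rewrite /bump leq0n add1n -mulrDl cfS.
Qed.

Section Final.
Context {R : realType} {n : nat} (m : 'I_n) (beta : 'I_n -> nat) (f : R -> R) (x0 : R)
  (hf : forall t, derivable f t 1) (lam : nat)
  (hlam : (absdeg m beta <= 2 * lam + 1)%N).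
Notation V := 'rV[R]_n.
Notation L := (laplacian_wo m).
Notation M := (@monom R n m beta).

Definition F j := antider1n x0 j f.

Lemma F_S j : antider1 x0 (F j) = F j.+1.
Proof. by []. Qed.

Lemma F_der j t : derivable (F j) t 1.
Proof.
elim: j t => [|j IH] t; first exact: hf.
have cF : continuous (F j).
  by move=> s; apply: differentiable_continuous; apply/derivable1_diffP; exact: IH.
exact: (FTC_ant x0 _ t cF).1.
Qed.

Lemma F_cont j : continuous (F j).
Proof. by move=> s; apply: differentiable_continuous; apply/derivable1_diffP; exact: F_der. Qed.

Lemma F_Dfun j : (fun t => 'D_1 (F j.+1) t) = F j.
Proof. by apply/funext => t; exact: (FTC_ant x0 _ t (F_cont j)).2. Qed.

Lemma partial_m_F (P : V -> R) j : indep m P ->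
  partial m (prodf m P (F j.+1)) = prodf m P (F j).
Proof. by move=> iP; rewrite (partial_m_prodf m iP (F_der _)) F_Dfun. Qed.

Lemma partialn_F (P : V -> R) r j : indep m P ->
  partialn m r (prodf m P (F (r + j))) = prodf m P (F j).
Proof.
move=> iP; elim: r j => [//|r IH] j.
rewrite /partialn iterS -/(partialn m r _) addSnnS IH.
exact: partial_m_F.
Qed.

Lemma antidern_F (P : V -> R) r j : indep m P ->
  antidern x0 m r (prodf m P (F j)) = prodf m P (F (r + j)).
Proof.
move=> iP; elim: r => [//|r IH].
rewrite /antidern iterS -/(antidern x0 m r _) IH.
by rewrite (antider_prodf m _ _ _ iP (F_cont _)).
Qed.

Lemma lap_F d (P : V -> R) j : Pd m d P ->
  laplacian (prodf m P (F j.+2)) =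
  (fun x => prodf m (L P) (F j.+2) x + prodf m P (F j) x).
Proof.
move=> HP; apply/funext => x; rewrite /laplacian (bigD1 m) //= !F_S.
have iP := Pd_indep m HP.
rewrite !partial_m_F //.
have := congr1 (fun h => h x) (L_prodf m (F j.+2) HP).
rewrite /laplacian_wo => ->.
by rewrite addrC.
Qed.


Definition T p j : V -> R := prodf m (iter p L M) (F j).
Definition Qk k : V -> R := fun x => \sum_(p < lam.+1) cf R k p * T p (2 * k + 2 * p) x.

Lemma HM : Pd m (absdeg m beta) M.
Proof. exact: Pd_monom. Qed.

Lemma T_zero j x : T lam.+1 j x = 0.
Proof.
rewrite /T iterS (Pd_lap0 m _ _ (iterL_Pd m lam HM)); last by lia.
by rewrite /prodf mul0r.
Qed.

Lemma lapQ k : laplacian (Qk k.+1) = Qk k.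
Proof.
have -> : Qk k.+1 = fun x => \sum_(p < lam.+1) cf R k.+1 p * T p (2 * k + 2 * p).+2 x.
  apply/funext => x; apply: eq_bigr => p _.
  by have -> : (2 * k.+1 + 2 * p = (2 * k + 2 * p).+2)%N by lia.
rewrite (lap_lin _ (fun p : 'I_lam.+1 => cf R k.+1 p) (fun p : 'I_lam.+1 => T p (2 * k + 2 * p).+2)).
- apply/funext => x.
  pose S p := T p (2 * k + 2 * p) x.
  transitivity (\sum_(p < lam.+1) cf R k.+1 p * (S p.+1 + S p)).
    apply: eq_bigr => p _; rewrite /T (lap_F _ _ _ (iterL_Pd m p HM)) /S /T.
    by have -> : (2 * k + 2 * p.+1 = (2 * k + 2 * p).+2)%N by lia.
  by apply: comb; rewrite /S T_zero.
- move=> p i x; exact: (prodf_derivable m (iterL_Pd m p HM) (F_der _) i x).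
- move=> p i x; apply: (prodf_partial_derivable m (iterL_Pd m p HM) (F_der _)).
  by rewrite F_Dfun; exact: F_der.
Qed.

Lemma Q0 : Qk 0 = (fun x => f (x 0 m) * monom m beta x).
Proof.
apply/funext => x; rewrite /Qk big_ord_recl big1 ?addr0.
  by rewrite cf0 mul1r /T /prodf mulrC.
by move=> p _; rewrite ?lift0 /bump ?leq0n ?add1n cf0S mul0r.
Qed.

Lemma iter_lap k : iter k (@laplacian R n) (Qk k) = (fun x => f (x 0 m) * monom m beta x).
Proof.
elim: k => [|k IH]; first exact: Q0.
by rewrite iterSr lapQ.
Qed.

End Final.


Theorem corollary5p3 (R : realType) (n : nat) (k : nat) (m : 'I_n)
  (beta : 'I_n -> nat) (f : R -> R) (x0 : R) :
  (forall a b : R, lebesgue_measure.-integrable `[a, b] (EFin \o f)) ->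
  C1 (fun x : 'rV[R]_n => f (x 0 m) * monom m beta x) ->
  let q := fun x : 'rV[R]_n => f (x 0 m) * monom m beta x in
  let lam := lambda_of R (absdeg m beta) in
  let W := antidern x0 m (2 * lam + 2 * k) q in
  let Q := fun x : 'rV[R]_n =>
    \sum_(p < lam.+1)
      (-1) ^+ p * ('C(k + p - 1, p))%:R *
        partialn m (2 * lam - 2 * p) (iter p (laplacian_wo m) W) x in
  (forall x, W x = monom m beta x * antider1n x0 (2 * lam + 2 * k) f (x 0 m)) /\
  (forall x, Q x =
     \sum_(p < lam.+1)
       (-1) ^+ p * ('C(k + p - 1, p))%:R *
         antidern x0 m (2 * k + 2 * p) (iter p (laplacian_wo m) q) x) /\
  (forall x, iter k (@laplacian R n) Q x = q x).
Proof.
move=> Hint HC1 q lam W Q.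
have hf : forall t, derivable f t 1.
  move=> t; have [dq _] := HC1 m.
  pose x := setc (const_mx 1 : 'rV[R]_n) m t.
  have e : forall h : R, q (h *: ebasis R m + x) = f (h *: 1 + t).
    move=> h; rewrite /q; rewrite shift_setc monom_indep setc_m /x setc_m [h *: 1]mulr1.
    have -> : monom m beta (setc (const_mx 1 : 'rV[R]_n) m t) = 1.
      by rewrite /monom big1 // => i im; rewrite mxE (negPf im) mxE expr1n.
    by rewrite mulr1.
  have [E1 _] := @der_transfer R _ _ q f x (ebasis R m) t 1 e.
  by apply/E1; exact: dq.
have hlam : (absdeg m beta <= 2 * lam + 1)%N := lam_bound R _.
have hM := @HM R n m beta.
have qE : q = prodf m (monom m beta) (F f x0 0).
  by apply/funext => x; rewrite /q /prodf mulrC.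
have WE : W = prodf m (monom m beta) (F f x0 (2 * lam + 2 * k)).
  by rewrite /W qE (antidern_F m f x0 hf _ _ _ (Pd_indep m hM)) addn0.
have E1 : forall p : 'I_lam.+1,
    partialn m (2 * lam - 2 * p) (iter p (laplacian_wo m) W) = T m beta f x0 p (2 * k + 2 * p).
  move=> p; have hp := ltn_ord p.
  rewrite WE (iterL_prodf m (F f x0 _) p hM).
  have -> : (2 * lam + 2 * k = (2 * lam - 2 * p) + (2 * k + 2 * p))%N by lia.
  by rewrite (partialn_F m f x0 hf _ _ _ (Pd_indep m (iterL_Pd m p hM))).
have E2 : forall p : 'I_lam.+1,
    antidern x0 m (2 * k + 2 * p) (iter p (laplacian_wo m) q) = T m beta f x0 p (2 * k + 2 * p).
  move=> p.
  rewrite qE (iterL_prodf m (F f x0 _) p hM).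
  by rewrite (antidern_F m f x0 hf _ _ _ (Pd_indep m (iterL_Pd m p hM))) addn0.
have QE : Q = Qk m beta f x0 lam k.
  apply/funext => x; rewrite /Q /Qk; apply: eq_bigr => p _.
  by rewrite E1.
split; first by move=> x; rewrite WE.
split.
  move=> x; rewrite QE /Qk; apply: eq_bigr => p _.
  by rewrite E2.
move=> x; rewrite QE (iter_lap m beta f x0 hf lam hlam k).
by [].
Qed.
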